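(* Let $n,t\in\mathbb{N}$, let $B\subset[n]$ be a random set (defined on the same probability space as the shuffle) and let $D\subset[n]$ be a deterministic set. Suppose that for some $c>0$, $$\min_{j\in D}\mathbb{P}^n_{id}(j\in B\mid j\in A^t)\ge c.$$ Then, writing $K=\mathbb{E}^n_{id}|D\cap A^t|$, for every $r\in(0,1)$, $$\mathbb{P}^n_{id}\Big(|B\cap D\cap A^t|\le r\cdot\mathbb{E}^n_{id}\{|B\cap D\cap A^t|\}\Big)\le\frac{K+(1-c^2)K^2}{(1-r)^2c^2K^2}.$$
   Context: The random-to-random insertions shuffle on a deck of $n$ cards numbered $1,\dots,n$: at each step a card is chosen uniformly at random, removed, and reinserted at a uniformly random position. $\mathbb{P}^n_{id}$ (with expectation $\mathbb{E}^n_{id}$) denotes the law of the shuffling process started from the identity ordering, and $A^t$ denotes the (random) set of cards that have not been chosen for removal in the first $t$ shuffles. $[n]=\{1,\dots,n\}$. *)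

(* Defs.v *)
From HB Require Import structures.
From mathcomp Require Import all_boot all_order all_algebra.
From mathcomp Require Import reals.
Set Implicit Arguments. Unset Strict Implicit. Unset Printing Implicit Defensive.
Import Order.TTheory GRing.Theory Num.Theory.
Local Open Scope ring_scope.

Definition is_prob (R : realType) (Omega : finType) (P : Omega -> R) : Prop :=
  (forall w, 0 <= P w) /\ \sum_(w : Omega) P w = 1.

Definition Pr (R : realType) (Omega : finType) (P : Omega -> R) (E : pred Omega) : R :=
  \sum_(w : Omega | E w) P w.

Definition Ex (R : realType) (Omega : finType) (P : Omega -> R) (X : Omega -> R) : R :=
  \sum_(w : Omega) P w * X w.

Definition condPr (R : realType) (Omega : finType) (P : Omega -> R) (E F : pred Omega) : R :=
  Pr P (fun w => E w && F w) / Pr P F.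

(* Random-to-random shuffle on n cards (cards are 'I_n = {0,..,n-1}), first t steps:
   Z s w = (card chosen for removal at step s, position where it is reinserted),
   the position ranging over the n slots.  Under P^n_id the choices of the t steps
   are i.i.d. uniform on 'I_n * 'I_n, i.e. every sequence of choices has
   probability (1/n^2)^t. *)
Definition rtr_choices (R : realType) (Omega : finType) (P : Omega -> R)
  (n t : nat) (Z : 'I_t -> Omega -> 'I_n * 'I_n) : Prop :=
  forall f : {ffun 'I_t -> 'I_n * 'I_n},
    Pr P (fun w => [forall s : 'I_t, Z s w == f s]) = ((n * n)%:R ^-1) ^+ t.

(* A^t : cards not chosen for removal in the first t shuffles. *)
Definition untouched (Omega : finType) (n t : nat) (Z : 'I_t -> Omega -> 'I_n * 'I_n)
  (w : Omega) : {set 'I_n} :=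
  [set j : 'I_n | [forall s : 'I_t, (Z s w).1 != j]].

(* Main.v *)
Require Import Defs.
From HB Require Import structures.
From mathcomp Require Import all_boot all_order all_algebra.
From mathcomp Require Import reals lra ring zify.
Import Order.TTheory GRing.Theory Num.Theory.
Local Open Scope ring_scope.

Lemma pr_Z (R : realType) (Omega : finType) (P : Omega -> R) (n t : nat)
  (Z : 'I_t -> Omega -> 'I_n * 'I_n) (Q : pred {ffun 'I_t -> 'I_n * 'I_n}) :
  rtr_choices P Z ->
  Pr P (fun w => Q [ffun s => Z s w]) = #|[set f | Q f]|%:R * ((n * n)%:R ^-1) ^+ t.
Proof.
move=> HZ; rewrite /Pr (partition_big (fun w => [ffun s => Z s w]) Q) //=.
rewrite (eq_bigr (fun _ => ((n * n)%:R ^-1) ^+ t)); last first.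
  move=> f Qf; rewrite -(HZ f) /Pr; apply: eq_bigl => w.
  apply/andP/forallP.
    by move=> [_ /eqP <-] s; rewrite ffunE.
  move=> H; have e : [ffun s => Z s w] = f.
    by apply/ffunP => s; rewrite ffunE; apply/eqP/H.
  by rewrite e Qf eqxx.
rewrite (eq_bigl (fun f => f \in [set f | Q f])) => [|f]; last by rewrite inE.
by rewrite sumr_const mulr_natl.
Qed.

Lemma card_avoid (n t : nat) (S : {set 'I_n}) :
  #|[set f : {ffun 'I_t -> 'I_n * 'I_n} | [forall s, (f s).1 \notin S]]| = (((n - #|S|) * n) ^ t)%N.
Proof.
have -> : [set f : {ffun 'I_t -> 'I_n * 'I_n} | [forall s, (f s).1 \notin S]]
   = [set f | f \in ffun_on (mem (setX (~: S) [set: 'I_n]))].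
  apply/setP => f; rewrite !inE; apply/forallP/ffun_onP.
    by move=> H s; rewrite !inE andbT; apply: H.
  by move=> H s; have := H s; rewrite !inE andbT.
rewrite cardsE card_ffun_on cardsX cardsT card_ord card_ord.
by rewrite (cardsCs (~: S)) setCK card_ord.
Qed.

Lemma subset_untouched (Omega : finType) (n t : nat) (Z : 'I_t -> Omega -> 'I_n * 'I_n)
  (S : {set 'I_n}) (w : Omega) :
  (S \subset untouched Z w) = [forall s, ([ffun s => Z s w] s).1 \notin S].
Proof.
apply/subsetP/forallP.
  move=> H s; rewrite ffunE; apply/negP => hS; have := H _ hS.
  by rewrite inE => /forallP/(_ s); rewrite eqxx.
move=> H x hx; rewrite inE; apply/forallP => s; have := H s; rewrite ffunE.
by apply: contraNneq => ->.
Qed.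
Lemma Pr_ext (R : realType) (Omega : finType) (P : Omega -> R) (E F : pred Omega) :
  (forall w, E w = F w) -> Pr P E = Pr P F.
Proof. by move=> h; rewrite /Pr; apply: eq_bigl. Qed.

Lemma key_ineq (R : realType) (n t : nat) : (1 < n)%N ->
  (((n - 2) * n) ^ t)%:R * ((n * n)%:R ^-1) ^+ t <=
  ((((n - 1) * n) ^ t)%:R * ((n * n)%:R ^-1) ^+ t) *
  ((((n - 1) * n) ^ t)%:R * ((n * n)%:R ^-1) ^+ t) :> R.
Proof.
move=> n2.
rewrite !natrX !natrM !natrB //; last by lia.
rewrite -!exprMn.
set m : R := n%:R.
have m2 : 2 <= m by rewrite /m (ler_nat R 2 n).
have mne : m != 0 by apply/negP => /eqP e; rewrite e in m2; lra.
have e1 : (m - 2%:R) * m * (m * m)^-1 = (m - 2) / m by rewrite /=; field.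
have e2 : (m - 1%:R) * m * (m * m)^-1 * ((m - 1%:R) * m * (m * m)^-1) = ((m - 1) / m) ^+ 2.
  by field.
rewrite e1 e2; apply: lerXn2r.
- rewrite nnegrE divr_ge0 //; lra.
- rewrite nnegrE exprn_ge0 // divr_ge0 //; lra.
have e3 : ((m - 1) / m) ^+ 2 - (m - 2) / m = (m ^+ 2)^-1 by field.
rewrite -subr_ge0 e3 invr_ge0 exprn_ge0 //; lra.
Qed.

Lemma pr_sub (R : realType) (Omega : finType) (P : Omega -> R) (n t : nat)
  (Z : 'I_t -> Omega -> 'I_n * 'I_n) (S : {set 'I_n}) :
  rtr_choices P Z ->
  Pr P (fun w => S \subset untouched Z w) =
  ((((n - #|S|) * n) ^ t)%N)%:R * ((n * n)%:R ^-1) ^+ t.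
Proof.
move=> HZ.
rewrite (@Pr_ext _ _ P _ (fun w => (fun f : {ffun 'I_t -> 'I_n * 'I_n} =>
   [forall s, (f s).1 \notin S]) [ffun s => Z s w])); last first.
  by move=> w; rewrite subset_untouched.
by rewrite (@pr_Z R Omega P n t Z (fun f => [forall s, (f s).1 \notin S]) HZ) card_avoid.
Qed.

Lemma negcor (R : realType) (Omega : finType) (P : Omega -> R) (n t : nat)
  (Z : 'I_t -> Omega -> 'I_n * 'I_n) (i j : 'I_n) :
  rtr_choices P Z -> i != j ->
  Pr P (fun w => (i \in untouched Z w) && (j \in untouched Z w)) <=
  Pr P (fun w => i \in untouched Z w) * Pr P (fun w => j \in untouched Z w).
Proof.
move=> HZ ij.
have n2 : (1 < n)%N.
  have := ltn_ord i; have := ltn_ord j; move: ij.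
  rewrite -val_eqE /=; lia.
rewrite (@Pr_ext _ _ P _ (fun w => [set i; j] \subset untouched Z w)); last first.
  by move=> w; rewrite subUset !sub1set.
rewrite (@Pr_ext _ _ P (fun w => i \in untouched Z w) (fun w => [set i] \subset untouched Z w)); last first.
  by move=> w; rewrite sub1set.
rewrite (@Pr_ext _ _ P (fun w => j \in untouched Z w) (fun w => [set j] \subset untouched Z w)); last first.
  by move=> w; rewrite sub1set.
rewrite !pr_sub // cards2 ij !cards1.
exact: key_ineq.
Qed.

Lemma Ex_ext (R : realType) (Omega : finType) (P : Omega -> R) (f g : Omega -> R) :
  (forall w, f w = g w) -> Ex P f = Ex P g.
Proof. by move=> h; rewrite /Ex; apply: eq_bigr => w _; rewrite h. Qed.

Lemma Ex_sum (R : realType) (Omega I : finType) (P : Omega -> R) (D : {set I})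
  (f : I -> Omega -> R) :
  Ex P (fun w => \sum_(j in D) f j w) = \sum_(j in D) Ex P (f j).
Proof.
rewrite /Ex; under eq_bigr do rewrite mulr_sumr.
exact: exchange_big.
Qed.

Lemma Ex_ind (R : realType) (Omega : finType) (P : Omega -> R) (b : pred Omega) :
  Ex P (fun w => (b w)%:R) = Pr P b.
Proof.
rewrite /Ex /Pr [RHS]big_mkcond; apply: eq_bigr => w _.
by case: (b w); rewrite ?mulr1 ?mulr0.
Qed.

Lemma card_sum (R : realType) (T : finType) (S : {set T}) :
  #|S|%:R = \sum_j (j \in S)%:R :> R.
Proof.
rewrite -sum1_card natr_sum big_mkcond; apply: eq_bigr => j _.
by case: (j \in S).
Qed.

Lemma Pr_ge0 (R : realType) (Omega : finType) (P : Omega -> R) (E : pred Omega) :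
  (forall w, 0 <= P w) -> 0 <= Pr P E.
Proof. by move=> h; apply: sumr_ge0 => w _. Qed.

Theorem lemma2 (R : realType) (Omega : finType) (P : Omega -> R) (n t : nat)
  (Z : 'I_t -> Omega -> 'I_n * 'I_n) (B : Omega -> {set 'I_n}) (D : {set 'I_n}) (c : R) :
  is_prob P ->
  rtr_choices P Z ->
  D != set0 ->
  (forall j, j \in D -> 0 < Pr P (fun w => j \in untouched Z w)) ->
  0 < c ->
  (forall j, j \in D ->
     c <= condPr P (fun w => j \in B w) (fun w => j \in untouched Z w)) ->
  let K := Ex P (fun w => #|D :&: untouched Z w|%:R) in
  forall r : R, 0 < r < 1 ->
    Pr P (fun w => #|B w :&: D :&: untouched Z w|%:R
                   <= r * Ex P (fun w' => #|B w' :&: D :&: untouched Z w'|%:R))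
    <= (K + (1 - c ^+ 2) * K ^+ 2) / ((1 - r) ^+ 2 * c ^+ 2 * K ^+ 2).
Proof.
move=> [P0 P1] HZ HD Hpos Hc Hcond K r /andP[r0 r1].
pose X := fun w => #|B w :&: D :&: untouched Z w|%:R : R.
pose Y := fun w => #|D :&: untouched Z w|%:R : R.
change (Pr P (fun w => X w <= r * Ex P X) <= (K + (1 - c ^+ 2) * K ^+ 2) / ((1 - r) ^+ 2 * c ^+ 2 * K ^+ 2)).
have KY : K = Ex P Y by [].
set mu := Ex P X.
have Xs : forall w, X w = \sum_(j in D) ((j \in B w) && (j \in untouched Z w))%:R.
  move=> w; rewrite /X card_sum [RHS]big_mkcond; apply: eq_bigr => j _.
  by rewrite !inE; case: (j \in D); rewrite /= ?andbT ?andbF.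
have Ys : forall w, Y w = \sum_(j in D) (j \in untouched Z w)%:R.
  move=> w; rewrite /Y card_sum [RHS]big_mkcond; apply: eq_bigr => j _.
  by rewrite !inE; case: (j \in D).
have KE : K = \sum_(j in D) Pr P (fun w => j \in untouched Z w).
  rewrite KY (@Ex_ext _ _ P _ _ Ys) Ex_sum; apply: eq_bigr => j _; exact: Ex_ind.
have muE : mu = \sum_(j in D) Pr P (fun w => (j \in B w) && (j \in untouched Z w)).
  rewrite /mu (@Ex_ext _ _ P _ _ Xs) Ex_sum; apply: eq_bigr => j _; exact: Ex_ind.
have cK : c * K <= mu.
  rewrite KE muE mulr_sumr; apply: ler_sum => j jD.
  by have := Hcond j jD; rewrite /condPr ler_pdivlMr ?Hpos.
have Kpos : 0 < K.
  case/set0Pn: HD => j0 j0D; rewrite KE (bigD1 j0) //=.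
  have := Hpos j0 j0D.
  have : 0 <= \sum_(j in D | j != j0) Pr P (fun w => j \in untouched Z w).
    by apply: sumr_ge0 => j _; apply: Pr_ge0.
  lra.
have cKpos : 0 < c * K by rewrite mulr_gt0.
have mupos : 0 < mu by lra.
have Xge0 : forall w, 0 <= X w by move=> w; rewrite /X ler0n.
have EX2 : Ex P (fun w => X w ^+ 2) <= Ex P (fun w => Y w ^+ 2).
  rewrite /Ex; apply: ler_sum => w _; apply: ler_wpM2l => //.
  apply: lerXn2r; rewrite ?nnegrE ?ler0n //.
  rewrite /X /Y ler_nat; apply: subset_leq_card.
  by rewrite -setIA setIA; apply: setSI; apply: subsetIr.
have EY2e : Ex P (fun w => Y w ^+ 2) = \sum_(i in D) \sum_(j in D)
      Pr P (fun w => (i \in untouched Z w) && (j \in untouched Z w)).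
  rewrite (@Ex_ext _ _ P _ (fun w => \sum_(i in D) \sum_(j in D)
       ((i \in untouched Z w) && (j \in untouched Z w))%:R)); last first.
    move=> w; rewrite Ys expr2 mulr_suml; apply: eq_bigr => i _.
    by rewrite mulr_sumr; apply: eq_bigr => j _; rewrite -natrM mulnb.
  rewrite Ex_sum; apply: eq_bigr => i _; rewrite Ex_sum; apply: eq_bigr => j _.
  exact: Ex_ind.
have EY2 : Ex P (fun w => Y w ^+ 2) <= K + K ^+ 2.
  rewrite EY2e.
  have -> : K + K ^+ 2 = \sum_(i in D) (Pr P (fun w => i \in untouched Z w)
                + Pr P (fun w => i \in untouched Z w) * K).
    by rewrite big_split /= -mulr_suml -KE expr2.
  apply: ler_sum => i iD.
  rewrite (bigD1 i) //= (@Pr_ext _ _ P _ (fun w => i \in untouched Z w)); last by move=> w; rewrite andbb.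
  rewrite KE mulr_sumr (bigD1 i iD) /=.
  have h1 : \sum_(j in D | j != i)
         Pr P (fun w => (i \in untouched Z w) && (j \in untouched Z w)) <=
       \sum_(j in D | j != i) Pr P (fun w => i \in untouched Z w) * Pr P (fun w => j \in untouched Z w).
    apply: ler_sum => j /andP[_ ji]; apply: negcor => //; by rewrite eq_sym.
  have h2 : 0 <= Pr P (fun w => i \in untouched Z w) * Pr P (fun w => i \in untouched Z w).
    by rewrite mulr_ge0 // Pr_ge0.
  lra.
have V : \sum_w P w * (mu - X w) ^+ 2 = Ex P (fun w => X w ^+ 2) - mu ^+ 2.
  have muD : mu = \sum_w P w * X w by [].
  rewrite (eq_bigr (fun w => mu ^+ 2 * P w - (2 * mu) * (P w * X w) + P w * X w ^+ 2));
    last by move=> w _; ring.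
  rewrite big_split sumrB /= -!mulr_sumr P1 -muD /Ex; ring.
have M : Pr P (fun w => X w <= r * mu) * ((1 - r) * mu) ^+ 2 <= \sum_w P w * (mu - X w) ^+ 2.
  rewrite /Pr mulr_suml [s in _ <= s](bigID (fun w => X w <= r * mu)) /=.
  have h1 : \sum_(w | X w <= r * mu) P w * ((1 - r) * mu) ^+ 2 <=
            \sum_(w | X w <= r * mu) P w * (mu - X w) ^+ 2.
    apply: ler_sum => w hw; apply: ler_wpM2l => //.
    apply: lerXn2r; rewrite ?nnegrE; nra.
  have h2 : 0 <= \sum_(w | ~~ (X w <= r * mu)) P w * (mu - X w) ^+ 2.
    by apply: sumr_ge0 => w _; rewrite mulr_ge0 // sqr_ge0.
  lra.
set p := Pr P _ in M *.
have p0 : 0 <= p by apply: Pr_ge0.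
have den : 0 < (1 - r) ^+ 2 * c ^+ 2 * K ^+ 2.
  by rewrite !mulr_gt0 // ?exprn_gt0 // subr_gt0.
rewrite ler_pdivlMr //.
have hm : (c * K) ^+ 2 <= mu ^+ 2 by apply: lerXn2r; rewrite ?nnegrE; lra.
have hu : 0 <= p * (1 - r) ^+ 2 by rewrite mulr_ge0 // sqr_ge0.
have hh : (p * (1 - r) ^+ 2 + 1) * (c * K) ^+ 2 <= (p * (1 - r) ^+ 2 + 1) * mu ^+ 2.
  by apply: ler_wpM2l => //; lra.
move: M; rewrite V => M.
have : p * ((1 - r) * mu) ^+ 2 <= K + K ^+ 2 - mu ^+ 2 by lra.
move: hh; rewrite !exprMn; nra.
Qed.
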